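(* Let $P$ be a 6-stack and let $Q$ be a retract of $P$ which (with the induced order) is isomorphic to a tower of sections. If there is an integer $i\ge 0$ with $\emptyset\ne P(i)\subseteq Q$, then $Q=P$.
   Context: All posets are finite. For a poset $P$ and $p\in P$, the rank $r(p)$ of $p$ is the largest $m$ such that there is a chain $p_0<\dots<p_m=p$ in $P$. $P$ is ranked of rank $r(P)$ if every maximal chain has exactly $r(P)+1$ elements. For $0\le i\le j$, $P(i,j)=\{p\in P:i\le r(p)\le j\}$, $P(i)=P(i,i)$ (induced order). A subset $Q\subseteq P$ (induced order) is a retract of $P$ if there is an order-preserving $f:P\to Q$ with $f(q)=q$ for all $q\in Q$. The 6-crown $C_6$ is the poset on $\{x_0,x_1,x_2,y_0,y_1,y_2\}$ whose only strict comparabilities are $x_0<y_0>x_1<y_1>x_2<y_2>x_0$. A 6-stack is a ranked poset $P$ of rank $n\ge1$ such that $P(i,i+1)\cong C_6$ for each $0\le i<n$. The ordinal sum of posets $P_1,\dots,P_k$ ($k\ge1$) is their disjoint union ordered by the orders of the $P_i$ together with $p<q$ whenever $p\in P_i,q\in P_j,i<j$. A section is either a two-element antichain or a poset on the set $\{[i,k]: 0\le i\le 2,\ 0\le k\le n\}$ (with $3(n+1)$ distinct elements), for some $n\ge 1$, such that: (1) $[i,k]<[i,l]$ whenever $0\le k<l\le n$; (2) for each $k$, $\{[0,k],[1,k],[2,k]\}$ is an antichain; (3) $[i,k]<[j,l]$ implies $[i+1,k]<[j+1,l]$ (first indices mod $3$); (4) for each $0\le k<n$ there are $i,j$ with $[i,k]\not<[j,k+1]$.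 A tower of sections is an ordinal sum of one or more sections. *)

(* Defs.v *)
(* Finite posets are given as a finType T with a strict
   partial order lt : rel T (irreflexive, transitive). *)
From mathcomp Require Import all_boot.
Set Implicit Arguments. Unset Strict Implicit. Unset Printing Implicit Defensive.

Section Posets.
Variable T : finType.
Variable lt : rel T.

Definition spo := irreflexive lt /\ transitive lt.

Definition leo (x y : T) : bool := (x == y) || lt x y.

Definition chain_to (p : T) (m : nat) : bool :=
  [exists t : (m.+1).-tuple T, sorted lt t && (last p t == p)].

(* rank r(p): the largest m with a chain p_0 < ... < p_m = p
   (such chains have distinct elements, hence m < #|T|) *)
Definition rk (p : T) : nat := \max_(m < #|T| | chain_to p m) m.

Definition Pband (i j : nat) : {set T} := [set p | i <= rk p <= j].
Definition Plevel (i : nat) : {set T} := Pband i i.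

Definition is_chain (C : {set T}) : Prop :=
  {in C &, forall x y, x != y -> lt x y || lt y x}.
Definition maximal_chain (C : {set T}) : Prop :=
  is_chain C /\ forall D : {set T}, is_chain D -> C \subset D -> D = C.

Definition ranked_of (n : nat) : Prop :=
  forall C : {set T}, maximal_chain C -> #|C| = n.+1.

Definition iso_sub (U : finType) (ltU : rel U) (S : {set T}) : Prop :=
  exists f : U -> T,
    [/\ injective f, (forall x, f x \in S), (forall y, y \in S -> exists x, f x = y)
      & (forall x y, ltU x y = lt (f x) (f y))].

Definition retract (Q : {set T}) : Prop :=
  exists f : T -> T,
    [/\ (forall x y, leo x y -> leo (f x) (f y)),
        (forall x, f x \in Q) & (forall q, q \in Q -> f q = q)].
End Posets.

(* The 6-crown on 'I_6: x_i := i, y_i := 3 + i (i < 3);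
   x_0<y_0>x_1<y_1>x_2<y_2>x_0, i.e. x_j < y_i iff j = i or j = i+1 mod 3. *)
Definition c6_lt (a b : 'I_6) : bool :=
  [&& (a < 3)%N, (3 <= b)%N & (val a == b - 3) || (val a == (b - 3).+1 %% 3)].

Definition six_stack (T : finType) (lt : rel T) : Prop :=
  exists n : nat, [/\ (1 <= n)%N, ranked_of lt n &
    forall i : nat, (i < n)%N -> iso_sub lt c6_lt (Pband lt i i.+1)].

(* A section (non-antichain case): a poset on {[i,k] : i < 3, k <= n},
   realised as the type 'I_3 * 'I_n.+1 with [i,k] = (i,k). *)
Definition is_section_order (n : nat) (ltS : rel ('I_3 * 'I_n.+1)) : Prop :=
  [/\ spo ltS,
      (forall (i : 'I_3) (k l : 'I_n.+1), (k < l)%N -> ltS (i, k) (i, l)),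
      (forall (i j : 'I_3) (k : 'I_n.+1), ~~ ltS (i, k) (j, k)),
      (forall (i j : 'I_3) (k l : 'I_n.+1),
                   ltS (i, k) (j, l) -> ltS (ordS i, k) (ordS j, l))
    & (forall k : 'I_n.+1, (k < n)%N ->
                   exists (i j : 'I_3) (k' : 'I_n.+1),
                     val k' = k.+1 /\ ~~ ltS (i, k) (j, k'))].

Definition antichain2_lt : rel bool := fun _ _ => false.

Definition iso_section (T : finType) (lt : rel T) (S : {set T}) : Prop :=
  iso_sub lt antichain2_lt S \/
  exists n : nat, (1 <= n)%N /\
    exists ltS : rel ('I_3 * 'I_n.+1), is_section_order ltS /\ iso_sub lt ltS S.

(* Q (induced order) is isomorphic to a tower of sections, i.e. to an ordinal
   sum of k >= 1 sections: Q splits into blocks Q_0,...,Q_{k-1} (block of q is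
   blk q), each isomorphic to a section, with p < q whenever blk p < blk q. *)
Definition iso_tower (T : finType) (lt : rel T) (Q : {set T}) : Prop :=
  exists (k : nat) (blk : T -> nat),
    [/\ (1 <= k)%N,
        (forall q, q \in Q -> (blk q < k)%N),
        (forall j, (j < k)%N -> iso_section lt [set q in Q | blk q == j])
      & (forall p q, p \in Q -> q \in Q -> (blk p < blk q)%N -> lt p q)].

(* Main.v *)
Require Import Defs.
From mathcomp Require Import all_boot.
From mathcomp Require Import zify.
Set Implicit Arguments. Unset Strict Implicit. Unset Printing Implicit Defensive.


Definition incomp (T : finType) (lt : rel T) (x y : T) := ~~ lt x y && ~~ lt y x.

Lemma three_two (p1 p2 p3 q1 q2 q3 : bool) : p1||p2 -> p1||p3 -> p2||p3 ->
  q1||q2 -> q1||q3 -> q2||q3 -> [|| p1 && q1, p2 && q2 | p3 && q3].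
Proof. by case: p1; case: p2; case: p3; case: q1; case: q2; case: q3. Qed.

Section Abs.
Variables (T : finType) (lt : rel T) (lev : T -> nat) (n : nat).
Hypothesis ltirr : irreflexive lt.
Hypothesis lttr : transitive lt.
Hypothesis levle : forall x, lev x <= n.
Hypothesis S1 : forall x y, lt x y -> lev x < lev y.
Hypothesis S3 : forall k, k <= n -> exists x1 x2 x3,
  [/\ lev x1 = k, lev x2 = k, lev x3 = k & [&& x1 != x2, x1 != x3 & x2 != x3]].
Hypothesis S4 : forall k y x x', lev y = k.+1 -> lev x = k -> lev x' = k -> x != x' ->
  ~~ lt x y -> ~~ lt x' y -> False.
Hypothesis S5 : forall k x y y', lev x = k -> lev y = k.+1 -> lev y' = k.+1 -> y != y' ->
  ~~ lt x y -> ~~ lt x y' -> False.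

Lemma below_ex k y x1 x2 : lev y = k.+1 -> lev x1 = k -> lev x2 = k -> x1 != x2 ->
  lt x1 y || lt x2 y.
Proof.
move=> Hy H1 H2 D.
case: (boolP (lt x1 y)) => //= n1; case: (boolP (lt x2 y)) => //= n2.
exfalso; exact: (S4 Hy H1 H2 D n1 n2).
Qed.

Lemma above_ex k x y1 y2 : lev x = k -> lev y1 = k.+1 -> lev y2 = k.+1 -> y1 != y2 ->
  lt x y1 || lt x y2.
Proof.
move=> Hx H1 H2 D.
case: (boolP (lt x y1)) => //= n1; case: (boolP (lt x y2)) => //= n2.
exfalso; exact: (S5 Hx H1 H2 D n1 n2).
Qed.

Lemma S2d d : forall x y, lev y = lev x + d.+2 -> lt x y.
Proof.
elim: d => [|d IH] x y Hy.
- have Hn : (lev x).+1 <= n by have := levle y; lia.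
  have [z1 [z2 [z3 [H1 H2 H3 /and3P [D12 D13 D23]]]]] := S3 Hn.
  have Hy' : lev y = (lev x).+2 by lia.
  have := three_two (above_ex (erefl _) H1 H2 D12) (above_ex (erefl _) H1 H3 D13)
    (above_ex (erefl _) H2 H3 D23)
    (below_ex Hy' H1 H2 D12) (below_ex Hy' H1 H3 D13) (below_ex Hy' H2 H3 D23).
  by case/or3P => /andP [a b]; apply: lttr b.
- have Hn : lev x + d.+2 <= n by have := levle y; lia.
  have [z1 [z2 [z3 [H1 H2 H3 /and3P [D12 D13 D23]]]]] := S3 Hn.
  have Hy' : lev y = (lev x + d.+2).+1 by lia.
  case/orP: (below_ex Hy' H1 H2 D12) => Hz.
  + by apply: lttr Hz; apply: IH; rewrite H1.
  + by apply: lttr Hz; apply: IH; rewrite H2.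
Qed.

Lemma S2 x y : lev x + 2 <= lev y -> lt x y.
Proof. move=> H; apply: (S2d (d := lev y - lev x - 2)); lia. Qed.

Lemma below_one k y x1 x2 : k.+1 <= lev y -> lev x1 = k -> lev x2 = k -> x1 != x2 ->
  lt x1 y || lt x2 y.
Proof.
move=> Hy H1 H2 D.
case: (ltngtP (lev y) k.+1) => Hk; first by lia.
- by rewrite S2 //; lia.
- exact: below_ex Hk H1 H2 D.
Qed.

Lemma incomp_lev x y : incomp lt x y -> lev x <= (lev y).+1.
Proof.
case/andP => _ H; rewrite leqNgt; apply/negP => H'.
by move: H; rewrite S2 //; lia.
Qed.

Lemma same_incomp x y : lev x = lev y -> incomp lt x y.
Proof.
move=> E; apply/andP; split; apply/negP => /S1; lia.
Qed.

Lemma anti3 x y z : [&& x != y, x != z & y != z] ->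
  [&& incomp lt x y, incomp lt x z & incomp lt y z] -> lev x = lev y.
Proof.
move=> /and3P [Dxy Dxz Dyz] /and3P [Ixy Ixz Iyz].
have Lxy := incomp_lev Ixy. have Lyx := incomp_lev (y:=x) (x:=y).
have Lxz := incomp_lev Ixz. have Lyz := incomp_lev Iyz.
rewrite /incomp in Ixy Ixz Iyz.
have Lyx' : lev y <= (lev x).+1 by apply: Lyx; rewrite /incomp andbC.
have Lzx : lev z <= (lev x).+1 by apply: incomp_lev; rewrite /incomp andbC.
have Lzy : lev z <= (lev y).+1 by apply: incomp_lev; rewrite /incomp andbC.
case/andP: Ixy => Ixy1 Ixy2. case/andP: Ixz => Ixz1 Ixz2. case/andP: Iyz => Iyz1 Iyz2.
case: (ltngtP (lev x) (lev y)) => // H.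
-
  have Ey : lev y = (lev x).+1 by lia.
  case: (ltngtP (lev z) (lev x)) => Hz.
  + lia.
  + have Ez : lev z = lev y by lia.
    exfalso; exact: (S5 (erefl _) Ey (etrans Ez Ey) Dyz Ixy1 Ixz1).
  + exfalso; exact: (S4 Ey (erefl _) Hz Dxz Ixy1 (negbT (introF idP (fun h => (negP Iyz2) h)))).
- have Ex : lev x = (lev y).+1 by lia.
  case: (ltngtP (lev z) (lev y)) => Hz.
  + lia.
  + have Ez : lev z = lev x by lia.
    exfalso; exact: (S5 (erefl _) Ex (etrans Ez Ex) Dxz Ixy2 Iyz1).
  + exfalso; exact: (S4 Ex (erefl _) Hz Dyz Ixy2 Ixz2).
Qed.

Hypothesis S6 : forall k a a' b b', lev a = k -> lev a' = k -> lev b = k.+1 -> lev b' = k.+1 ->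
  a != a' -> b != b' -> lt a b -> lt a' b -> lt a b' -> lt a' b' -> False.
Hypothesis S8 : forall k y, lev y = k.+1 -> exists2 x, lev x = k & ~~ lt x y.
Hypothesis S9 : forall k x1 x2 x3 x4, lev x1 = k -> lev x2 = k -> lev x3 = k -> lev x4 = k ->
  [&& x1 != x2, x1 != x3, x1 != x4, x2 != x3, x2 != x4 & x3 != x4] -> False.

Variables (Q : {set T}) (f : T -> T).
Hypothesis fmono : forall x y, leo lt x y -> leo lt (f x) (f y).
Hypothesis fQ : forall x, f x \in Q.
Hypothesis fid : forall q, q \in Q -> f q = q.
Hypothesis F1 : forall q, q \in Q -> exists2 q', q' \in Q & (q' != q) && incomp lt q q'.
Hypothesis F2 : forall q x y z, q \in Q -> x \in Q -> y \in Q -> z \in Q -> q != x ->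
  incomp lt q x -> [&& x != y, x != z & y != z] ->
  [&& incomp lt x y, incomp lt x z & incomp lt y z] ->
  exists u v, [/\ u \in Q, v \in Q, [&& q != u, q != v & u != v] &
                  [&& incomp lt q u, incomp lt q v & incomp lt u v]].

Lemma two_below k y : lev y = k.+1 -> exists a a', [/\ a != a', lev a = k, lev a' = k, lt a y & lt a' y].
Proof.
move=> Hy.
have Hn : k <= n by have := levle y; lia.
have [z1 [z2 [z3 [H1 H2 H3 /and3P [D12 D13 D23]]]]] := S3 Hn.
have A12 := below_ex Hy H1 H2 D12. have A13 := below_ex Hy H1 H3 D13.
have A23 := below_ex Hy H2 H3 D23.
case: (boolP (lt z1 y)) A12 A13 A23 => a1; case: (boolP (lt z2 y)) => a2;
  case: (boolP (lt z3 y)) => a3 //= _ _ _.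
- by exists z1, z2.
- by exists z1, z2.
- by exists z1, z3.
- by exists z2, z3.
Qed.

Lemma common_below k w w' : k.+1 <= lev w -> k.+1 <= lev w' -> exists x, [/\ lev x = k, lt x w & lt x w'].
Proof.
move=> Hw Hw'.
have Hn : k <= n by have := levle w; lia.
have [z1 [z2 [z3 [H1 H2 H3 /and3P [D12 D13 D23]]]]] := S3 Hn.
have := three_two (below_one Hw H1 H2 D12) (below_one Hw H1 H3 D13) (below_one Hw H2 H3 D23)
  (below_one Hw' H1 H2 D12) (below_one Hw' H1 H3 D13) (below_one Hw' H2 H3 D23).
case/or3P => /andP [a b]; [exists z1 | exists z2 | exists z3]; by split.
Qed.

Lemma up t : t < n -> (forall x, lev x = t -> x \in Q) -> forall b, lev b = t.+1 -> b \in Q.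
Proof.
move=> tn HQ b Hb; apply/negPn/negP => bQ.
have E : forall y, lev y = t.+1 -> y \notin Q.
  move=> y Hy; apply/negP => yQ.
  have [a'' Ha'' Hna''] := S8 Hy.
  have [x1 [x2 [x3 [H1 H2 H3 /and3P [D12 D13 D23]]]]] := S3 (ltnW tn).
  have [y1 [y2 [Hy1 Hy2 /and3P [Da1 Da2 D]]]] : exists y1 y2, [/\ lev y1 = t, lev y2 = t &
      [&& a'' != y1, a'' != y2 & y1 != y2]].
    case: (eqVneq a'' x1) => [->|n1]; first by exists x2, x3; rewrite D12 D13 D23.
    case: (eqVneq a'' x2) => [->|n2]; first by exists x1, x3; rewrite eq_sym D12 D13 D23.
    by exists x1, x2; rewrite n1 n2 D12.
  have Iy : incomp lt y a''.
    apply/andP; split; last by [].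
    by apply/negP => /S1; lia.
  have yne : y != a'' by apply/eqP => e; move: Hy; rewrite e Ha''; lia.
  have [u [v [uQ vQ Dq Iq]]] := F2 yQ (HQ _ Ha'') (HQ _ Hy1) (HQ _ Hy2) yne Iy (introT and3P (And3 Da1 Da2 D))
    (introT and3P (And3 (same_incomp (etrans Ha'' (esym Hy1)))
                        (same_incomp (etrans Ha'' (esym Hy2)))
                        (same_incomp (etrans Hy1 (esym Hy2))))).
  case/and3P: Dq => Dyu Dyv Duv.
  have Eu : lev u = t.+1 by rewrite -Hy; symmetry; exact: anti3 (introT and3P (And3 Dyu Dyv Duv)) Iq.
  have Ev : lev v = t.+1.
    rewrite -Hy; symmetry; apply: (anti3 (x:=y) (y:=v) (z:=u)).
      by rewrite Dyv Dyu eq_sym Duv.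
    case/and3P: Iq => I1 I2 I3; rewrite I2 I1 /=.
    by rewrite /incomp andbC.
  have nb : forall q, q \in Q -> b != q by move=> q qQ; apply/eqP => e; rewrite e qQ in bQ.
  apply: (S9 Hb Hy Eu Ev).
  by rewrite (nb _ yQ) (nb _ uQ) (nb _ vQ) Dyu Dyv Duv.
have Hf : forall x, lev x = t.+1 -> t.+2 <= lev (f x).
  move=> x Hx.
  have [a [a' [Daa' Ha Ha' Hax Ha'x]]] := two_below Hx.
  have fa : leo lt a (f x) by rewrite -{1}(fid (HQ _ Ha)); apply: fmono; rewrite /leo Hax orbT.
  have fa' : leo lt a' (f x) by rewrite -{1}(fid (HQ _ Ha')); apply: fmono; rewrite /leo Ha'x orbT.
  have fxx : f x != x by apply/eqP => e; move: (E _ Hx); rewrite -e fQ.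
  have lta : lt a (f x).
    case/orP: fa => [/eqP e|//]; rewrite -e in fa'.
    case/orP: fa' => [/eqP e'|/S1]; last by lia.
    by rewrite e' eqxx in Daa'.
  have lta' : lt a' (f x).
    case/orP: fa' => [/eqP e|//]; rewrite -e in fa.
    case/orP: fa => [/eqP e'|/S1]; last by lia.
    by rewrite e' eqxx in Daa'.
  have := S1 lta; rewrite Ha => H.
  case: (ltngtP (lev (f x)) t.+1) => H'; [lia | lia |].
  exfalso; by apply: (S6 Ha Ha' Hx H' Daa' _ Hax Ha'x lta lta'); rewrite eq_sym.
have Pfb : (f b \in Q) && (t.+2 <= lev (f b)) by rewrite fQ Hf.
case: (@arg_minnP _ (f b) (fun z => (z \in Q) && (t.+2 <= lev z)) lev Pfb) => e /andP [eQ He] Hmin.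
have [e' e'Q /andP [De Ie]] := F1 eQ.
have He' : t.+2 <= lev e'.
  have L := incomp_lev Ie.
  case: (eqVneq (lev e') t.+1) => H; first by move: (E _ H); rewrite e'Q.
  lia.
have [x [Hx xe xe']] := common_below (k:=t.+1) He He'.
have fxe : leo lt (f x) e by rewrite -(fid eQ); apply: fmono; rewrite /leo xe orbT.
have fxe' : leo lt (f x) e' by rewrite -(fid e'Q); apply: fmono; rewrite /leo xe' orbT.
have fxQ : (f x \in Q) && (t.+2 <= lev (f x)) by rewrite fQ Hf.
have Hm := Hmin _ fxQ.
case/orP: fxe => [/eqP fe|/S1]; last by lia.
rewrite fe in fxe'.
case/orP: fxe' => [/eqP ee|l]; first by rewrite ee eqxx in De.
by case/andP: Ie => /negP.
Qed.

End Abs.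


Lemma incompC (T : finType) (lt : rel T) x y :
  incomp (fun a b => lt b a) x y = incomp lt x y.
Proof. by rewrite /incomp andbC. Qed.

Section Abs2.
Variables (T : finType) (lt : rel T) (lev : T -> nat) (n : nat).
Hypothesis lttr : transitive lt.
Hypothesis levle : forall x, lev x <= n.
Hypothesis S1 : forall x y, lt x y -> lev x < lev y.
Hypothesis S3 : forall k, k <= n -> exists x1 x2 x3,
  [/\ lev x1 = k, lev x2 = k, lev x3 = k & [&& x1 != x2, x1 != x3 & x2 != x3]].
Hypothesis S4 : forall k y x x', lev y = k.+1 -> lev x = k -> lev x' = k -> x != x' ->
  ~~ lt x y -> ~~ lt x' y -> False.
Hypothesis S5 : forall k x y y', lev x = k -> lev y = k.+1 -> lev y' = k.+1 -> y != y' ->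
  ~~ lt x y -> ~~ lt x y' -> False.
Hypothesis S6 : forall k a a' b b', lev a = k -> lev a' = k -> lev b = k.+1 -> lev b' = k.+1 ->
  a != a' -> b != b' -> lt a b -> lt a' b -> lt a b' -> lt a' b' -> False.
Hypothesis S8 : forall k y, lev y = k.+1 -> exists2 x, lev x = k & ~~ lt x y.
Hypothesis S8d : forall k x, lev x = k -> k < n -> exists2 y, lev y = k.+1 & ~~ lt x y.
Hypothesis S9 : forall k x1 x2 x3 x4, lev x1 = k -> lev x2 = k -> lev x3 = k -> lev x4 = k ->
  [&& x1 != x2, x1 != x3, x1 != x4, x2 != x3, x2 != x4 & x3 != x4] -> False.

Variables (Q : {set T}) (f : T -> T).
Hypothesis fmono : forall x y, leo lt x y -> leo lt (f x) (f y).
Hypothesis fQ : forall x, f x \in Q.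
Hypothesis fid : forall q, q \in Q -> f q = q.
Hypothesis F1 : forall q, q \in Q -> exists2 q', q' \in Q & (q' != q) && incomp lt q q'.
Hypothesis F2 : forall q x y z, q \in Q -> x \in Q -> y \in Q -> z \in Q -> q != x ->
  incomp lt q x -> [&& x != y, x != z & y != z] ->
  [&& incomp lt x y, incomp lt x z & incomp lt y z] ->
  exists u v, [/\ u \in Q, v \in Q, [&& q != u, q != v & u != v] &
                  [&& incomp lt q u, incomp lt q v & incomp lt u v]].

Lemma down t : 0 < t -> t <= n -> (forall x, lev x = t -> x \in Q) ->
  forall b, lev b = t.-1 -> b \in Q.
Proof.
move=> t0 tn HQ b Hb.
apply: (@up T (fun x y => lt y x) (fun x => n - lev x) n _ _ _ _ _ _ _ _ _ Q f _ _ _ _ _ (n - t)) .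
- by move=> y x z H1 H2; exact: lttr H2 H1.
- move=> x; lia.
- move=> x y /S1; have := levle x; have := levle y; lia.
- move=> k Hk; have [x1 [x2 [x3 [H1 H2 H3 D]]]] := S3 (leq_subr k n).
  exists x1, x2, x3; split => //; lia.
- move=> k y x x' Hy Hx Hx' D n1 n2.
  have := levle x; have := levle y; have := levle x' => l1 l2 l3.
  apply: (S5 (k := lev y) (x := y) (y := x) (y' := x')) => //; lia.
- move=> k x y y' Hx Hy Hy' D n1 n2.
  have := levle x; have := levle y; have := levle y' => l1 l2 l3.
  apply: (S4 (k := lev y) (y := x) (x := y) (x' := y')) => //; lia.
- move=> k a a' c c' Ha Ha' Hc Hc' D D' l1 l2 l3 l4.
  have := levle a; have := levle a'; have := levle c; have := levle c' => m1 m2 m3 m4.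
  apply: (S6 (k := lev c) (a := c) (a' := c') (b := a) (b' := a')) => //; lia.
- move=> k y Hy.
  have := levle y => ly.
  have [x Hx nx] := S8d (k := lev y) (erefl _) (ltac:(lia)).
  exists x => //; have := levle x; lia.
- move=> k x1 x2 x3 x4 H1 H2 H3 H4 D.
  have := levle x1; have := levle x2; have := levle x3; have := levle x4 => l1 l2 l3 l4.
  apply: (S9 (k := lev x1) (x1 := x1) (x2 := x2) (x3 := x3) (x4 := x4)) => //; lia.
- move=> x y; rewrite /leo [x == y]eq_sym [f x == f y]eq_sym; exact: fmono.
- exact: fQ.
- exact: fid.
- move=> q qQ; have [q' q'Q H] := F1 qQ; exists q' => //; by rewrite (incompC lt).
- move=> q x y z qQ xQ yQ zQ D; rewrite !(incompC lt) => I1 D2 I2.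
  have [u [v [uQ vQ Du Iu]]] := F2 qQ xQ yQ zQ D I1 D2 I2.
  by exists u, v; rewrite !(incompC lt).
- lia.
- move=> x Hx; apply: HQ; have := levle x; lia.
- lia.
Qed.

Lemma all_levels i : i <= n -> (forall x, lev x = i -> x \in Q) -> forall x, x \in Q.
Proof.
move=> iN HQ.
have Hup : forall d, i + d <= n -> forall x, lev x = i + d -> x \in Q.
  elim=> [|d IH] Hd x Hx; first by apply: HQ; lia.
  apply: (up lttr levle S1 S3 S4 S5 S6 S8 S9 fmono fQ fid F1 F2 (t := i + d)).
  - lia.
  - apply: IH; lia.
  - lia.
have Hdn : forall d, d <= i -> forall x, lev x = i - d -> x \in Q.
  elim=> [|d IH] Hd x Hx; first by apply: HQ; lia.
  apply: (down (t := i - d)).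
  - lia.
  - lia.
  - apply: IH; lia.
  - lia.
move=> x; have := levle x => lx.
case: (leqP i (lev x)) => H.
- apply: (Hup (lev x - i)); lia.
- apply: (Hdn (i - lev x)); lia.
Qed.

End Abs2.


Section Rank.
Variables (T : finType) (lt : rel T).
Hypothesis Hspo : spo lt.

Let ltirr : irreflexive lt := proj1 Hspo.
Let lttr : transitive lt := proj2 Hspo.

Lemma chain_toP p m : reflect (exists s, [/\ size s = m.+1, sorted lt s & last p s = p])
  (chain_to lt p m).
Proof.
apply: (iffP existsP) => [[t /andP [st /eqP lt']]|[s [Hs ss ls]]].
  by exists (val t); rewrite size_tuple.
have Hs' : size s == m.+1 by apply/eqP.
by exists (Tuple Hs'); rewrite /= ss ls eqxx.
Qed.

Lemma sorted_size s : sorted lt s -> size s <= #|T|.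
Proof.
move=> ss; have u := sorted_uniq lttr ltirr ss.
move/card_uniqP: u => <-; exact: max_card.
Qed.

Lemma rk_ge p m : chain_to lt p m -> m <= rk lt p.
Proof.
move=> H; have /chain_toP [s [Hs ss _]] := H.
have Hm : m < #|T| by have := sorted_size ss; rewrite Hs.
exact: (@leq_bigmax_cond _ (fun m : 'I_#|T| => chain_to lt p m) (fun m => m) (Ordinal Hm)).
Qed.

Lemma chain0 p : chain_to lt p 0.
Proof. by apply/chain_toP; exists [:: p]. Qed.

Lemma rk_attained p : chain_to lt p (rk lt p).
Proof.
have h0 : 0 < #|T| by apply/card_gt0P; exists p.
rewrite /rk (@bigmax_eq_arg _ (Ordinal h0) (fun m : 'I_#|T| => chain_to lt p m)) ?chain0 //.
by case: arg_maxnP => //; exact: chain0.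
Qed.

Lemma rk_lt x y : lt x y -> rk lt x < rk lt y.
Proof.
move=> Hxy; apply: rk_ge.
have /chain_toP [s [Hs ss ls]] := rk_attained x.
case: s Hs ss ls => [//|h s] Hs ss ls.
apply/chain_toP; exists (h :: rcons s y); split.
- by rewrite /= size_rcons; move: Hs => /= ->.
- by rewrite /= rcons_path; move: ss ls => /= -> ->.
- by rewrite /= last_rcons.
Qed.

Definition chainb (C : {set T}) :=
  [forall x in C, forall y in C, (x != y) ==> lt x y || lt y x].

Lemma chainbP C : chainb C -> is_chain lt C.
Proof.
move=> /forall_inP H x y Hx Hy Dxy.
by move: (H x Hx) => /forall_inP /(_ y Hy) /implyP /(_ Dxy).
Qed.

Lemma chainbI C : is_chain lt C -> chainb C.
Proof.
move=> H; apply/forall_inP => x Hx; apply/forall_inP => y Hy; apply/implyP; exact: H.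
Qed.

Lemma sorted_chainb s : sorted lt s -> chainb [set z in s].
Proof.
move=> ss; apply/chainbI => x y; rewrite !inE => Hx Hy Dxy.
have ix := index_mem x s; have iy := index_mem y s.
rewrite Hx in ix; rewrite Hy in iy.
have Hn := sorted_ltn_nth lttr x ss.
case: (ltngtP (index x s) (index y s)) => H.
- by have := Hn _ _ ix iy H; rewrite !nth_index // => ->.
- by have := Hn _ _ iy ix H; rewrite !nth_index // => ->; rewrite orbT.
- by move: Dxy; rewrite -(nth_index x Hx) -(nth_index x Hy) H eqxx.
Qed.

Lemma rk_le_n n : ranked_of lt n -> forall x, rk lt x <= n.
Proof.
move=> Hr x.
have /chain_toP [s [Hs ss ls]] := rk_attained x.
set C := [set z in s].
have cC : chainb C by exact: sorted_chainb.
have P0 : chainb C && (C \subset C) by rewrite cC subxx.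
case: (@arg_maxnP _ C (fun D => chainb D && (C \subset D)) (fun D => #|D|) P0)
  => D /andP [cD sCD] Hmax.
have mD : maximal_chain lt D.
  split; first exact: chainbP.
  move=> E cE sDE; apply/eqP; rewrite eq_sym eqEcard sDE /=.
  by apply: Hmax; rewrite chainbI // (subset_trans sCD sDE).
have := Hr _ mD => HD.
have : #|C| <= #|D| by exact: subset_leq_card.
rewrite HD /C cardsE.
have u := sorted_uniq lttr ltirr ss.
move/card_uniqP: u => ->; rewrite Hs; lia.
Qed.

End Rank.


Definition o6 : seq 'I_6 := [:: @Ordinal 6 0 isT; @Ordinal 6 1 isT; @Ordinal 6 2 isT;
  @Ordinal 6 3 isT; @Ordinal 6 4 isT; @Ordinal 6 5 isT].
Lemma mem_o6 (a : 'I_6) : a \in o6.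
Proof. case: a => [[|[|[|[|[|[|m]]]]]] Hm] //; by rewrite (bool_irrelevance Hm isT). Qed.
Lemma all6 (P : pred 'I_6) : all P o6 -> forall a, P a.
Proof. by move/allP => H a; apply: H; exact: mem_o6. Qed.

Lemma c6_up : all (fun a : 'I_6 => (a < 3) ==> has (fun b : 'I_6 => c6_lt a b) o6) o6.
Proof. by []. Qed.
Lemma c6_dn : all (fun b : 'I_6 => (3 <= b) ==> has (fun a : 'I_6 => c6_lt a b) o6) o6.
Proof. by []. Qed.
Lemma c6_S4 : all (fun a : 'I_6 => all (fun a' : 'I_6 => all (fun c : 'I_6 =>
  ~~ [&& 3 <= c, a < 3, a' < 3, a != a', ~~ c6_lt a c & ~~ c6_lt a' c]) o6) o6) o6.
Proof. by []. Qed.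
Lemma c6_S5 : all (fun a : 'I_6 => all (fun c : 'I_6 => all (fun c' : 'I_6 =>
  ~~ [&& a < 3, 3 <= c, 3 <= c', c != c', ~~ c6_lt a c & ~~ c6_lt a c']) o6) o6) o6.
Proof. by []. Qed.
Lemma c6_S6 : all (fun a : 'I_6 => all (fun b : 'I_6 => all (fun c : 'I_6 => all (fun d : 'I_6 => ~~ [&& a < 3, b < 3, 3 <= c, 3 <= d, a != b, c != d, c6_lt a c, c6_lt b c, c6_lt a d & c6_lt b d]) o6) o6) o6) o6.
Proof. by []. Qed.
Lemma c6_S8 : all (fun c : 'I_6 => (3 <= c) ==> has (fun a : 'I_6 => (a < 3) && ~~ c6_lt a c) o6) o6.
Proof. by []. Qed.
Lemma c6_S8d : all (fun a : 'I_6 => (a < 3) ==> has (fun c : 'I_6 => (3 <= c) && ~~ c6_lt a c) o6) o6.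
Proof. by []. Qed.
Lemma c6_S9 : all (fun a1 : 'I_6 => all (fun a2 : 'I_6 => all (fun a3 : 'I_6 => all (fun a4 : 'I_6 =>
  ~~ [&& [&& a1 != a2, a1 != a3, a1 != a4, a2 != a3, a2 != a4 & a3 != a4] &
      [&& a1 < 3, a2 < 3, a3 < 3 & a4 < 3] || [&& 3 <= a1, 3 <= a2, 3 <= a3 & 3 <= a4]])
  o6) o6) o6) o6.
Proof. by []. Qed.

Definition oo (m : nat) (H : m < 6) : 'I_6 := Ordinal H.

Section Stack.
Variables (T : finType) (lt : rel T) (n : nat).
Hypothesis Hspo : spo lt.
Hypothesis Hn1 : 1 <= n.
Hypothesis Hr : ranked_of lt n.
Hypothesis Hb : forall k, k < n -> iso_sub lt c6_lt (Pband lt k k.+1).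

Lemma levle x : rk lt x <= n.
Proof. have := @rk_le_n T lt Hspo n Hr x. done. Qed.

Lemma band k : k < n -> exists g : 'I_6 -> T, [/\ injective g,
  (forall a, rk lt (g a) = k + (3 <= a)),
  (forall x, k <= rk lt x <= k.+1 -> exists a, g a = x) &
  (forall a b, c6_lt a b = lt (g a) (g b))].
Proof.
move=> kn; have [g [gi gin gs glt]] := Hb kn.
exists g; split => // [a|x Hx]; last by apply: gs; rewrite /Pband inE.
have := gin a; rewrite /Pband inE => /andP [h1 h2].
case: (ltnP a 3) => Ha.
- move: (all6 c6_up a); rewrite Ha implyTb => /hasP [b _ Hab].
  have := gin b; rewrite /Pband inE => /andP [_ h3].
  rewrite glt in Hab; have := rk_lt Hspo Hab.
  rewrite /=; lia.
- move: (all6 c6_dn a); rewrite Ha implyTb => /hasP [b _ Hab].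
  have := gin b; rewrite /Pband inE => /andP [h3 _].
  rewrite glt in Hab; have := rk_lt Hspo Hab.
  rewrite /=; lia.
Qed.

Lemma pre k (g : 'I_6 -> T) : (forall a, rk lt (g a) = k + (3 <= a)) ->
  (forall x, k <= rk lt x <= k.+1 -> exists a, g a = x) -> forall x,
  (rk lt x = k -> exists2 a, g a = x & a < 3) /\
  (rk lt x = k.+1 -> exists2 a, g a = x & 3 <= a).
Proof.
move=> gr gs x; split => Hx.
- have [a Ha] := gs x (ltac:(rewrite Hx; lia)).
  exists a => //; have := gr a; rewrite Ha Hx => E.
  case: (ltnP a 3) => h //; move: E; rewrite h; lia.
- have [a Ha] := gs x (ltac:(rewrite Hx; lia)).
  exists a => //; have := gr a; rewrite Ha Hx => E.
  case: (ltnP a 3) => h //; move: E.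
  have -> : (3 <= a) = false by rewrite leqNgt h.
  lia.
Qed.

Lemma S3c k : k <= n -> exists x1 x2 x3,
  [/\ rk lt x1 = k, rk lt x2 = k, rk lt x3 = k & [&& x1 != x2, x1 != x3 & x2 != x3]].
Proof.
move=> kN; case: (ltnP k n) => kn.
- have [g [gi gr gs glt]] := band kn.
  exists (g (@oo 0 isT)), (g (@oo 1 isT)), (g (@oo 2 isT)).
  by rewrite !gr !(inj_eq gi) /=; split => //; lia.
- have kn' : n.-1 < n by lia.
  have [g [gi gr gs glt]] := band kn'.
  exists (g (@oo 3 isT)), (g (@oo 4 isT)), (g (@oo 5 isT)).
  by rewrite !gr !(inj_eq gi) /=; split => //; lia.
Qed.

Lemma pre_lo k (g : 'I_6 -> T) (gr : forall a, rk lt (g a) = k + (3 <= a))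
  (gs : forall x, k <= rk lt x <= k.+1 -> exists a, g a = x) x :
  rk lt x = k -> exists2 a, g a = x & a < 3.
Proof. have [h _] := pre gr gs x. exact: h. Qed.
Lemma pre_hi k (g : 'I_6 -> T) (gr : forall a, rk lt (g a) = k + (3 <= a))
  (gs : forall x, k <= rk lt x <= k.+1 -> exists a, g a = x) x :
  rk lt x = k.+1 -> exists2 a, g a = x & 3 <= a.
Proof. have [_ h] := pre gr gs x. exact: h. Qed.

Lemma S4c k y x x' : rk lt y = k.+1 -> rk lt x = k -> rk lt x' = k -> x != x' ->
  ~~ lt x y -> ~~ lt x' y -> False.
Proof.
move=> Hy Hx Hx' D n1 n2.
have kn : k < n by have := levle y; lia.
have [g [gi gr gs glt]] := band kn.
have [c Ec Hc] := pre_hi gr gs Hy.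
have [a Ea Ha] := pre_lo gr gs Hx.
have [a' Ea' Ha'] := pre_lo gr gs Hx'.
subst; rewrite (inj_eq gi) in D; rewrite -!glt in n1 n2.
have := allP (allP (all6 c6_S4 a) a' (mem_o6 _)) c (mem_o6 _).
by rewrite Hc Ha Ha' D n1 n2.
Qed.

Lemma S5c k x y y' : rk lt x = k -> rk lt y = k.+1 -> rk lt y' = k.+1 -> y != y' ->
  ~~ lt x y -> ~~ lt x y' -> False.
Proof.
move=> Hx Hy Hy' D n1 n2.
have kn : k < n by have := levle y; lia.
have [g [gi gr gs glt]] := band kn.
have [c Ec Hc] := pre_hi gr gs Hy.
have [c' Ec' Hc'] := pre_hi gr gs Hy'.
have [a Ea Ha] := pre_lo gr gs Hx.
subst; rewrite (inj_eq gi) in D; rewrite -!glt in n1 n2.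
have := allP (allP (all6 c6_S5 a) c (mem_o6 _)) c' (mem_o6 _).
by rewrite Hc Hc' Ha D n1 n2.
Qed.

Lemma S6c k a a' b b' : rk lt a = k -> rk lt a' = k -> rk lt b = k.+1 -> rk lt b' = k.+1 ->
  a != a' -> b != b' -> lt a b -> lt a' b -> lt a b' -> lt a' b' -> False.
Proof.
move=> Ha Ha' Hb' Hb'' D D' l1 l2 l3 l4.
have kn : k < n by have := levle b; lia.
have [g [gi gr gs glt]] := band kn.
have [c Ec Hc] := pre_hi gr gs Hb'.
have [c' Ec' Hc'] := pre_hi gr gs Hb''.
have [e Ee He] := pre_lo gr gs Ha.
have [e' Ee' He'] := pre_lo gr gs Ha'.
subst; rewrite (inj_eq gi) in D; rewrite (inj_eq gi) in D'; rewrite -!glt in l1 l2 l3 l4.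
have := allP (allP (allP (all6 c6_S6 e) e' (mem_o6 _)) c (mem_o6 _)) c' (mem_o6 _).
by rewrite Hc Hc' He He' D D' l1 l2 l3 l4.
Qed.

Lemma S8c k y : rk lt y = k.+1 -> exists2 x, rk lt x = k & ~~ lt x y.
Proof.
move=> Hy.
have kn : k < n by have := levle y; lia.
have [g [gi gr gs glt]] := band kn.
have [c Ec Hc] := pre_hi gr gs Hy.
subst; move: (all6 c6_S8 c); rewrite Hc implyTb => /hasP [a _ /andP [Ha Hn]].
exists (g a); last by rewrite -glt.
rewrite gr; have -> : (3 <= a) = false by rewrite leqNgt Ha.
by rewrite addn0.
Qed.

Lemma S8dc k x : rk lt x = k -> k < n -> exists2 y, rk lt y = k.+1 & ~~ lt x y.
Proof.
move=> Hx kn.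
have [g [gi gr gs glt]] := band kn.
have [a Ea Ha] := pre_lo gr gs Hx.
subst; move: (all6 c6_S8d a); rewrite Ha implyTb => /hasP [c _ /andP [Hc Hn]].
exists (g c); last by rewrite -glt.
by rewrite gr Hc addn1.
Qed.

Lemma S9c k x1 x2 x3 x4 : rk lt x1 = k -> rk lt x2 = k -> rk lt x3 = k -> rk lt x4 = k ->
  [&& x1 != x2, x1 != x3, x1 != x4, x2 != x3, x2 != x4 & x3 != x4] -> False.
Proof.
move=> H1 H2 H3 H4 D.
have kN : k <= n by rewrite -H1; exact: levle.
case: (ltnP k n) => kn.
- have [g [gi gr gs glt]] := band kn.
  have [a1 E1 A1] := pre_lo gr gs H1.
  have [a2 E2 A2] := pre_lo gr gs H2.
  have [a3 E3 A3] := pre_lo gr gs H3.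
  have [a4 E4 A4] := pre_lo gr gs H4.
  subst; rewrite !(inj_eq gi) in D.
  have := allP (allP (allP (all6 c6_S9 a1) a2 (mem_o6 _)) a3 (mem_o6 _)) a4 (mem_o6 _).
  by rewrite D A1 A2 A3 A4.
- have kn' : n.-1 < n by lia.
  have [g [gi gr gs glt]] := band kn'.
  have ek : k = (n.-1).+1 by lia.
  rewrite ek in H1 H2 H3 H4.
  have [a1 E1 A1] := pre_hi gr gs H1.
  have [a2 E2 A2] := pre_hi gr gs H2.
  have [a3 E3 A3] := pre_hi gr gs H3.
  have [a4 E4 A4] := pre_hi gr gs H4.
  subst; rewrite !(inj_eq gi) in D.
  have := allP (allP (allP (all6 c6_S9 a1) a2 (mem_o6 _)) a3 (mem_o6 _)) a4 (mem_o6 _).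
  by rewrite D A1 A2 A3 A4 orbT.
Qed.

End Stack.


Lemma o3 (i : 'I_3) : [&& ordS i != i, ordS (ordS i) != i & ordS (ordS i) != ordS i].
Proof. case: i => [[|[|[|m]]] Hm] //. Qed.

Section Tower.
Variables (T : finType) (lt : rel T) (Q : {set T}).
Hypothesis Ht : iso_tower lt Q.

Lemma F1t q : q \in Q -> exists2 q', q' \in Q & (q' != q) && incomp lt q q'.
Proof.
move=> qQ; case: Ht => k [blk [k1 blkk Hsec Hord]].
have qB : q \in [set z in Q | blk z == blk q] by rewrite inE qQ eqxx.
case: (Hsec _ (blkk q qQ)) => [[g [gi gin gs glt]]|[m [m1 [ltS [[Hs S1 S2 S3 S4] [g [gi gin gs glt]]]]]]].
- have [x Hx] := gs q qB; exists (g (~~ x)).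
  + by have := gin (~~ x); rewrite inE => /andP [].
  + rewrite -Hx (inj_eq gi) /incomp -!glt /antichain2_lt /=; clear Hx; by case: x.
- have [[i kk] Hx] := gs q qB; exists (g (ordS i, kk)).
  + by have := gin (ordS i, kk); rewrite inE => /andP [].
  + rewrite -Hx (inj_eq gi) /incomp -!glt (negbTE (S2 _ _ _)) (negbTE (S2 _ _ _)) !andbT.
    by rewrite xpair_eqE eqxx andbT; case/and3P: (o3 i).
Qed.

Lemma F2t q x y z : q \in Q -> x \in Q -> y \in Q -> z \in Q -> q != x ->
  incomp lt q x -> [&& x != y, x != z & y != z] ->
  [&& incomp lt x y, incomp lt x z & incomp lt y z] ->
  exists u v, [/\ u \in Q, v \in Q, [&& q != u, q != v & u != v] &
                  [&& incomp lt q u, incomp lt q v & incomp lt u v]].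
Proof.
move=> qQ xQ yQ zQ Dqx Iqx D /and3P [Ixy Ixz Iyz].
case: Ht => k [blk [k1 blkk Hsec Hord]].
have sb : forall p r, p \in Q -> r \in Q -> incomp lt p r -> blk p = blk r.
  move=> p r pQ rQ /andP [n1 n2].
  case: (ltngtP (blk p) (blk r)) => // H.
  - by move: n1; rewrite Hord.
  - by move: n2; rewrite Hord.
have bx := sb _ _ qQ xQ Iqx. have byy := sb _ _ xQ yQ Ixy. have bz := sb _ _ xQ zQ Ixz.
set B := [set w in Q | blk w == blk q].
have inB : forall w, w \in Q -> blk w = blk q -> w \in B by move=> w wQ e; rewrite inE wQ e eqxx.
have qB := inB q qQ (erefl _).
have xB := inB x xQ (esym bx).
have yB := inB y yQ (etrans (esym byy) (esym bx)).
have zB := inB z zQ (etrans (esym bz) (esym bx)).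
case: (Hsec _ (blkk q qQ)) => [[g [gi gin gs glt]]|[m [m1 [ltS [[Hs S1 S2 S3 S4] [g [gi gin gs glt]]]]]]].
- exfalso.
  have [bx' Ex] := gs x xB. have [by' Ey] := gs y yB. have [bz' Ez] := gs z zB.
  move: D; rewrite -Ex -Ey -Ez !(inj_eq gi).
  clear Ex Ey Ez; by case: bx'; case: by'; case: bz'.
- have [[i kk] Hq] := gs q qB.
  have inQ : forall j, g (j, kk) \in Q by move=> j; have := gin (j, kk); rewrite inE => /andP [].
  exists (g (ordS i, kk)), (g (ordS (ordS i), kk)); split; rewrite ?inQ //.
  + rewrite -Hq !(inj_eq gi) !xpair_eqE !eqxx !andbT.
    by case/and3P: (o3 i) => h1 h2 h3; rewrite eq_sym h1 eq_sym h2 eq_sym h3.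
  + rewrite -Hq /incomp -!glt !(negbTE (S2 _ _ _)).
    done.
Qed.

End Tower.

Theorem lemma5p4 (T : finType) (lt : rel T) (Q : {set T}) (i : nat) :
  spo lt -> six_stack lt -> retract lt Q -> iso_tower lt Q ->
  Plevel lt i != set0 -> Plevel lt i \subset Q ->
  Q = [set: T].
Proof.
move=> Hspo [n [n1 Hr Hb]] [f [fmono fQ fid]] Ht Hne Hsub.
have [p Hp] := set0Pn _ Hne.
have Hpi : rk lt p = i.
  by move: Hp; rewrite /Plevel /Pband inE => /andP [h1 h2]; apply/eqP; rewrite eqn_leq h1 h2.
have iN : i <= n by rewrite -Hpi; exact: (levle Hspo Hr).
apply/setP => x; rewrite inE.
apply: (@all_levels T lt (rk lt) n (proj2 Hspo) (levle Hspo Hr) (rk_lt Hspo)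
  (S3c Hspo n1 Hb) (S4c Hspo n1 Hr Hb) (S5c Hspo n1 Hr Hb) (S6c Hspo n1 Hr Hb)
  (S8c Hspo n1 Hr Hb) (S8dc Hspo n1 Hb) (S9c Hspo n1 Hr Hb) Q f fmono fQ fid
  (F1t Ht) (F2t Ht) i iN).
move=> y Hy; apply: (subsetP Hsub); rewrite /Plevel /Pband inE Hy leqnn.
done.
Qed.
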